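(* Let $p\ge1$, $0<\ell<1/2$ and $B\ge1$. If $s\le 1$, then \[ \Big\|\sum_{n=1}^{\sqrt B}\frac{\sin(\pi n^2\ell)}{n^{2s}}e_{n^2}\Big\|_p\lesssim_s \ell\Big\|\sum_{n=1}^{\sqrt B}n^{2(1-s)}e_{n^2}\Big\|_p+B^{3-s}\ell^3\cosh(2\pi B\ell)\Big\|\sum_{n=1}^{\sqrt B}e_{n^2}\Big\|_p. \] If $1<s\le3$, then \[ \Big\|\sum_{n=1}^{\sqrt B}\frac{\sin(\pi n^2\ell)}{n^{2s}}e_{n^2}\Big\|_p\lesssim \ell\Big\|\sum_{n=1}^{\sqrt B}\frac{e_{n^2}}{n^{2(s-1)}}\Big\|_p+\ell^3\Big\|\sum_{n=1}^{\sqrt B}n^{2(3-s)}e_{n^2}\Big\|_p+B^{5-s}\ell^5\cosh(2\pi\ell B)\Big\|\sum_{n=1}^{\sqrt B}e_{n^2}\Big\|_p. \]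
   Context: $e_m(x)=e^{2\pi i m x}$ on $\mathbb T=\mathbb R/\mathbb Z$, $\|\cdot\|_p$ is the $L^p(\mathbb T)$ norm, and $\sum_{n=1}^{\sqrt B}$ is the sum over integers $1\le n\le\sqrt B$. $\lesssim_s$ means up to a constant depending only on $s$ (independent of $\ell$ and $B$). *)

(* Defs.v *)
From Stdlib Require Import Reals Lra.
From Coquelicot Require Import Coquelicot.
Open Scope R_scope.

(* real power with the convention 0^q = 0 (q > 0 in all uses); Rpower alone
   would give Rpower 0 q = 1. *)
Definition rpow (x q : R) : R :=
  if Req_EM_T x 0 then 0 else Rpower x q.

Fixpoint sum1 (N : nat) (f : nat -> R) : R :=
  match N with
  | O => 0
  | S k => sum1 k f + f (S k)
  end.

Definition nsqrt (B : R) : nat := Z.to_nat (Int_part (sqrt B)).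

(* modulus of the trigonometric polynomial sum_{n=1}^N a_n e_{n^2}(x),
   a_n real, e_m(x) = exp(2 pi i m x): |Re|^2 + |Im|^2 written out *)
Definition sq_poly_abs (a : nat -> R) (N : nat) (x : R) : R :=
  let re := sum1 N (fun n => a n * cos (2 * PI * INR (n * n) * x)) in
  let im := sum1 N (fun n => a n * sin (2 * PI * INR (n * n) * x)) in
  sqrt (re ^ 2 + im ^ 2).

(* L^p(T) norm, T = R/Z identified with [0,1] *)
Definition Lpnorm (p : R) (a : nat -> R) (N : nat) : R :=
  rpow (RInt (fun x => rpow (sq_poly_abs a N x) p) 0 1) (1 / p).

Definition npow (n : nat) (t : R) : R := Rpower (INR n) t.

(* Main.v *)
Require Import Defs.
From Stdlib Require Import Reals Lra Lia.
From Coquelicot Require Import Coquelicot.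
Open Scope R_scope.


Definition ReP (c : nat -> R) (N : nat) (y : R) : R :=
  sum1 N (fun n => c n * cos (2 * PI * INR (n * n) * y)).
Definition ImP (c : nat -> R) (N : nat) (y : R) : R :=
  sum1 N (fun n => c n * sin (2 * PI * INR (n * n) * y)).

Lemma sq_poly_abs_eq c N y : sq_poly_abs c N y = sqrt (ReP c N y ^ 2 + ImP c N y ^ 2).
Proof. reflexivity. Qed.

Lemma ReP_cont c N y : continuous (ReP c N) y.
Proof.
  induction N; unfold ReP; simpl.
  - apply continuous_const.
  - apply (continuous_plus (fun y => sum1 N (fun n => c n * cos (2 * PI * INR (n * n) * y)))
      (fun y => c (S N) * cos (2 * PI * INR (S N * S N) * y))); [exact IHN|].
    apply ex_derive_continuous. auto_derive. auto.
Qed.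

Lemma ImP_cont c N y : continuous (ImP c N) y.
Proof.
  induction N; unfold ImP; simpl.
  - apply continuous_const.
  - apply (continuous_plus (fun y => sum1 N (fun n => c n * sin (2 * PI * INR (n * n) * y)))
      (fun y => c (S N) * sin (2 * PI * INR (S N * S N) * y))); [exact IHN|].
    apply ex_derive_continuous. auto_derive. auto.
Qed.

Lemma rpow_nonneg y q : 0 <= rpow y q.
Proof. unfold rpow. destruct (Req_EM_T y 0). lra. unfold Rpower. left; apply exp_pos. Qed.

Lemma rpow_pos y q : y <> 0 -> rpow y q = Rpower y q.
Proof. intros. unfold rpow. destruct (Req_EM_T y 0). contradiction. reflexivity. Qed.

Lemma rpow_small y p : 1 <= p -> 0 < y <= 1 -> Rpower y p <= y.
Proof.
  intros Hp Hy. unfold Rpower.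
  assert (ln y <= 0). { rewrite <- ln_1. apply ln_le; lra. }
  rewrite <- (exp_ln y) at 2 by lra.
  destruct (Req_dec (p * ln y) (ln y)) as [E|E]. rewrite E; lra.
  left; apply exp_increasing. nra.
Qed.

Lemma rpabs_cont p y0 : 1 <= p -> continuous (fun y => rpow (Rabs y) p) y0.
Proof.
  intros Hp.
  destruct (Req_dec y0 0) as [E|E].
  - subst. apply continuity_pt_filterlim. apply continuity_pt_locally.
    intros eps. exists (mkposreal (Rmin 1 eps) ltac:(apply Rmin_pos; [lra| apply cond_pos])).
    intros u Hu. change (Rabs (u - 0) < Rmin 1 eps) in Hu.
    rewrite Rabs_R0. unfold rpow at 2. destruct (Req_EM_T 0 0); [|congruence].
    rewrite Rminus_0_r. rewrite Rminus_0_r in Hu.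
    pose proof (Rmin_l 1 eps). pose proof (Rmin_r 1 eps).
    unfold rpow. destruct (Req_EM_T (Rabs u) 0).
    + rewrite Rabs_R0. apply cond_pos.
    + rewrite Rabs_pos_eq by (unfold Rpower; left; apply exp_pos).
      pose proof (Rabs_pos u).
      pose proof (rpow_small (Rabs u) p Hp ltac:(lra)). lra.
  - apply (@continuous_ext_loc R_UniformSpace R_UniformSpace (fun y => rpow (Rabs y) p) (fun y => exp (p * (ln (y * y) / 2))) y0).
    2: apply (@ex_derive_continuous R_AbsRing R_NormedModule); auto_derive; assert (0 < y0 * y0) by (destruct (Rlt_or_le y0 0); nra); lra.
    + exists (mkposreal (Rabs y0) ltac:(apply Rabs_pos_lt; exact E)).
      intros u Hu. change (Rabs (u - y0) < Rabs y0) in Hu.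
      assert (u <> 0). { intro; subst. rewrite Rminus_0_l, Rabs_Ropp in Hu. lra. }
      rewrite rpow_pos by (apply Rabs_no_R0; auto).
      unfold Rpower. f_equal. f_equal.
      replace (u * u) with (Rabs u * Rabs u).
      rewrite ln_mult by (apply Rabs_pos_lt; auto). field.
      rewrite <- Rabs_mult. apply Rabs_pos_eq. nra.
Qed.

Lemma rpow_sq_cont p c N x : 1 <= p -> continuous (fun y => rpow (sq_poly_abs c N y) p) x.
Proof.
  intros Hp.
  apply (continuous_ext (fun y => rpow (Rabs (sq_poly_abs c N y)) p)).
  { intros y. rewrite Rabs_pos_eq. reflexivity. apply sqrt_pos. }
  apply (continuous_comp (fun y => sq_poly_abs c N y) (fun y => rpow (Rabs y) p)).
  2: apply rpabs_cont; auto.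
  apply (continuous_ext (fun y => sqrt (ReP c N y * ReP c N y + ImP c N y * ImP c N y))).
  { intros y. rewrite sq_poly_abs_eq. f_equal. ring. }
  apply continuous_sqrt_comp.
  apply (continuous_plus (fun y => ReP c N y * ReP c N y) (fun y => ImP c N y * ImP c N y)).
  - apply (continuous_mult (ReP c N) (ReP c N)); apply ReP_cont.
  - apply (continuous_mult (ImP c N) (ImP c N)); apply ImP_cont.
Qed.


Lemma Rpower_split u p : 0 < u -> Rpower u p = Rpower u (p - 1) * u.
Proof. intros. rewrite <- (Rpower_1 u) at 3 by auto. rewrite <- Rpower_plus. f_equal; ring. Qed.

Lemma tangent p u y : 1 <= p -> 0 < u -> 0 <= y ->
  Rpower u p + p * Rpower u (p - 1) * (y - u) <= rpow y p.
Proof.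
  intros Hp Hu Hy.
  assert (Hk : 0 < Rpower u (p - 1)) by (unfold Rpower; apply exp_pos).
  destruct (Req_dec y 0) as [E|E].
  - subst. unfold rpow. destruct (Req_EM_T 0 0); [|congruence].
    rewrite (Rpower_split u p Hu).
    assert (0 <= Rpower u (p - 1) * u * (p - 1)) by (apply Rmult_le_pos; [apply Rmult_le_pos|]; lra). nra.
  - rewrite rpow_pos by auto. assert (Hy' : 0 < y) by lra.
    set (K := p * Rpower u (p - 1)).
    pose (phi := fun z => exp (p * ln z) - K * z).
    pose (dphi := fun z => p * Rpower z (p - 1) - K).
    assert (Hmin : 0 < Rmin u y) by (apply Rmin_pos; lra).
    destruct (MVT_gen phi u y dphi) as [xi [Hxi Heq]].
    + intros z Hz. assert (0 < z) by lra. unfold phi, dphi.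
      auto_derive. lra. change (exp (p * ln z)) with (Rpower z p).
      rewrite (Rpower_split z p) by lra. field. lra.
    + intros z Hz. assert (0 < z) by lra. apply continuity_pt_filterlim.
      apply (@ex_derive_continuous R_AbsRing R_NormedModule). unfold phi. auto_derive. lra.
    + assert (Hxi0 : 0 < xi) by lra.
      assert (D : 0 <= dphi xi * (y - u)).
      { unfold dphi, K. destruct (Rle_or_lt u y) as [L|L].
        - rewrite Rmin_left, Rmax_right in Hxi by lra.
          assert (Rpower u (p - 1) <= Rpower xi (p - 1)) by (apply Rle_Rpower_l; lra).
          apply Rmult_le_pos; [|lra]. nra.
        - rewrite Rmin_right, Rmax_left in Hxi by lra.
          assert (Rpower xi (p - 1) <= Rpower u (p - 1)) by (apply Rle_Rpower_l; lra).
          replace ((p * Rpower xi (p - 1) - p * Rpower u (p - 1)) * (y - u)) with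
            ((p * Rpower u (p - 1) - p * Rpower xi (p - 1)) * (u - y)) by ring.
          apply Rmult_le_pos; [|lra]. nra. }
      unfold phi in Heq. fold (Rpower y p) in Heq. fold (Rpower u p) in Heq.
      rewrite (Rpower_split u p Hu) in Heq |- *. unfold K in *. nra.
Qed.


Lemma rpow_sqrt_cont p (f g : R -> R) (x : R) : 1 <= p -> continuous f x -> continuous g x ->
  continuous (fun y => rpow (sqrt (f y ^ 2 + g y ^ 2)) p) x.
Proof.
  intros Hp Hf Hg.
  apply (continuous_ext (fun y => rpow (Rabs (sqrt (f y * f y + g y * g y))) p)).
  { intros y. rewrite Rabs_pos_eq by apply sqrt_pos. f_equal. f_equal. ring. }
  apply (continuous_comp (fun y => sqrt (f y * f y + g y * g y)) (fun y => rpow (Rabs y) p)).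
  2: apply rpabs_cont; auto.
  apply continuous_sqrt_comp.
  apply (continuous_plus (fun y => f y * f y) (fun y => g y * g y)).
  - apply (continuous_mult f f); auto.
  - apply (continuous_mult g g); auto.
Qed.

Lemma isR_plus (f g : R -> R) (a b If Ig : R) : is_RInt f a b If -> is_RInt g a b Ig ->
  is_RInt (fun t => f t + g t) a b (If + Ig).
Proof. intros H1 H2. exact (is_RInt_plus f g a b If Ig H1 H2). Qed.
Lemma isR_scal (f : R -> R) (a b k If : R) : is_RInt f a b If ->
  is_RInt (fun t => k * f t) a b (k * If).
Proof. intros H1. exact (is_RInt_scal f a b k If H1). Qed.
Lemma isR_const (a b c : R) : is_RInt (fun _ => c) a b ((b - a) * c).
Proof. exact (@is_RInt_const R_NormedModule a b c). Qed.
Lemma isR_eq (f : R -> R) (a b l l' : R) : is_RInt f a b l -> l = l' -> is_RInt f a b l'.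
Proof. intros H ->. exact H. Qed.

Lemma jensen2 p (w1 w2 : R -> R) (a b A1 A2 : R) : 1 <= p -> a < b ->
  (forall t, continuous w1 t) -> (forall t, continuous w2 t) ->
  is_RInt w1 a b A1 -> is_RInt w2 a b A2 ->
  (b - a) * rpow (sqrt ((A1 / (b - a)) ^ 2 + (A2 / (b - a)) ^ 2)) p
  <= RInt (fun t => rpow (sqrt (w1 t ^ 2 + w2 t ^ 2)) p) a b.
Proof.
  intros Hp Hab C1 C2 I1 I2.
  set (L := b - a). assert (HL : 0 < L) by (unfold L; lra).
  set (v1 := A1 / L). set (v2 := A2 / L).
  set (u := sqrt (v1 ^ 2 + v2 ^ 2)).
  assert (Hex : ex_RInt (fun t => rpow (sqrt (w1 t ^ 2 + w2 t ^ 2)) p) a b).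
  { apply (@ex_RInt_continuous R_CompleteNormedModule). intros. apply rpow_sqrt_cont; auto. }
  pose proof (RInt_correct _ _ _ Hex) as HI.
  destruct (Req_dec u 0) as [E|E].
  - rewrite E. unfold rpow at 1. destruct (Req_EM_T 0 0); [|congruence].
    rewrite Rmult_0_r. apply (is_RInt_ge_0 _ a b _ (Rlt_le _ _ Hab) HI).
    intros. apply rpow_nonneg.
  - assert (Hu : 0 < u) by (pose proof (sqrt_pos (v1 ^ 2 + v2 ^ 2)); unfold u in *; lra).
    rewrite rpow_pos by auto.
    set (K := p * Rpower u (p - 1)).
    assert (HK : 0 <= K) by (unfold K; apply Rmult_le_pos; [lra | left; unfold Rpower; apply exp_pos]).
    set (c0 := Rpower u p - K * u). set (k1 := K * v1 / u). set (k2 := K * v2 / u).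
    assert (Iaff : is_RInt (fun t => c0 + k1 * w1 t + k2 * w2 t) a b
                     (L * c0 + k1 * A1 + k2 * A2)).
    { apply (isR_plus (fun t => c0 + k1 * w1 t) (fun t => k2 * w2 t)).
      apply (isR_plus (fun t => c0) (fun t => k1 * w1 t)).
      apply isR_const.
      apply (isR_scal w1). auto.
      apply (isR_scal w2). auto. }
    assert (Hval : L * c0 + k1 * A1 + k2 * A2 = L * Rpower u p).
    { assert (Hu2 : u * u = v1 ^ 2 + v2 ^ 2) by (unfold u; apply sqrt_sqrt; nra).
      assert (A1 = v1 * L) by (unfold v1; field; lra).
      assert (A2 = v2 * L) by (unfold v2; field; lra).
      unfold c0, k1, k2. rewrite H, H0. 
      assert (H1 : K * v1 / u * (v1 * L) + K * v2 / u * (v2 * L) = K * L * (u * u) / u)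
        by (rewrite Hu2; field; lra).
      rewrite Rplus_assoc, H1. field. lra. }
    rewrite <- Hval.
    apply (is_RInt_le _ _ a b _ _ (Rlt_le _ _ Hab) Iaff HI).
    intros t _.
    pose proof (tangent p u (sqrt (w1 t ^ 2 + w2 t ^ 2)) Hp Hu (sqrt_pos _)) as T.
    pose proof (sqrt_cauchy v1 v2 (w1 t) (w2 t)) as CS.
    unfold Rsqr in CS. fold u in T.
    replace (v1 * v1 + v2 * v2) with (v1 ^ 2 + v2 ^ 2) in CS by ring.
    replace (w1 t * w1 t + w2 t * w2 t) with (w1 t ^ 2 + w2 t ^ 2) in CS by ring.
    fold u in CS. set (W := sqrt (w1 t ^ 2 + w2 t ^ 2)) in *.
    assert (k1 * w1 t + k2 * w2 t = K * ((v1 * w1 t + v2 * w2 t) / u)) by (unfold k1, k2; field; lra).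
    assert ((v1 * w1 t + v2 * w2 t) / u <= W).
    { apply (Rmult_le_reg_r u); [lra|]. unfold Rdiv. rewrite Rmult_assoc, Rinv_l by lra. lra. }
    unfold c0. fold K in T. nra.
Qed.


Lemma term_cos (q bm am x l : R) : 0 < q -> bm = q * am ->
  is_RInt (fun t => bm * cos (2 * PI * q * (x + t))) (-(l/2)) (l/2)
    (sin (PI * q * l) * am * cos (2 * PI * q * x) / PI).
Proof.
  intros Hq Hb. pose proof PI_RGT_0.
  eapply isR_eq.
  - apply (is_RInt_derive (fun t => bm * sin (2 * PI * q * (x + t)) / (2 * PI * q))).
    + intros t _. auto_derive. auto. field. lra.
    + intros t _. apply (@ex_derive_continuous R_AbsRing R_NormedModule). auto_derive. auto.
  - change (minus ?u ?v) with (u - v).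
    replace (2 * PI * q * (x + l / 2)) with (2 * PI * q * x + PI * q * l) by field.
    replace (2 * PI * q * (x + - (l / 2))) with (2 * PI * q * x - PI * q * l) by field.
    rewrite sin_plus, sin_minus. rewrite Hb. set (s1 := sin (2 * PI * q * x)). set (c1 := cos (2 * PI * q * x)). set (s2 := sin (PI * q * l)). set (c2 := cos (PI * q * l)). field. lra.
Qed.

Lemma term_sin (q bm am x l : R) : 0 < q -> bm = q * am ->
  is_RInt (fun t => bm * sin (2 * PI * q * (x + t))) (-(l/2)) (l/2)
    (sin (PI * q * l) * am * sin (2 * PI * q * x) / PI).
Proof.
  intros Hq Hb. pose proof PI_RGT_0.
  eapply isR_eq.
  - apply (is_RInt_derive (fun t => - bm * cos (2 * PI * q * (x + t)) / (2 * PI * q))).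
    + intros t _. auto_derive. auto. field. lra.
    + intros t _. apply (@ex_derive_continuous R_AbsRing R_NormedModule). auto_derive. auto.
  - change (minus ?u ?v) with (u - v).
    replace (2 * PI * q * (x + l / 2)) with (2 * PI * q * x + PI * q * l) by field.
    replace (2 * PI * q * (x + - (l / 2))) with (2 * PI * q * x - PI * q * l) by field.
    rewrite cos_plus, cos_minus. rewrite Hb. set (s1 := sin (2 * PI * q * x)). set (c1 := cos (2 * PI * q * x)). set (s2 := sin (PI * q * l)). set (c2 := cos (PI * q * l)). field. lra.
Qed.

Lemma ReP_S c N y : ReP c (S N) y = ReP c N y + c (S N) * cos (2 * PI * INR (S N * S N) * y).
Proof. reflexivity. Qed.
Lemma ImP_S c N y : ImP c (S N) y = ImP c N y + c (S N) * sin (2 * PI * INR (S N * S N) * y).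
Proof. reflexivity. Qed.
Lemma ReP_0 c y : ReP c 0 y = 0.
Proof. reflexivity. Qed.
Lemma ImP_0 c y : ImP c 0 y = 0.
Proof. reflexivity. Qed.

Lemma ReP_int (a b : nat -> R) N (l x : R) :
  (forall n, (1 <= n <= N)%nat -> b n = INR (n * n) * a n) ->
  is_RInt (fun t => ReP b N (x + t)) (-(l/2)) (l/2)
    (ReP (fun n => sin (PI * INR (n * n) * l) * a n) N x / PI).
Proof.
  induction N; intros Hb.
  - apply (is_RInt_ext (fun _ => 0)). { intros; rewrite ReP_0; reflexivity. }
    apply (isR_eq _ _ _ _ _ (isR_const _ _ 0)). rewrite ReP_0. field. apply PI_neq0.
  - assert (Hq : 0 < INR (S N * S N)) by (apply lt_0_INR; lia).
    assert (Hbn : b (S N) = INR (S N * S N) * a (S N)) by (apply Hb; lia).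
    pose proof (term_cos (INR (S N * S N)) (b (S N)) (a (S N)) x l Hq Hbn) as T.
    assert (I : is_RInt (fun t => ReP b N (x + t)) (-(l/2)) (l/2)
       (ReP (fun n => sin (PI * INR (n * n) * l) * a n) N x / PI)) by (apply IHN; intros n Hn; apply Hb; lia).
    pose proof (isR_plus _ _ _ _ _ _ I T) as P.
    apply (is_RInt_ext _ _ _ _ _ (fun t _ => eq_sym (ReP_S b N (x + t)))).
    apply (isR_eq _ _ _ _ _ P). rewrite ReP_S.
    set (r := ReP (fun n => sin (PI * INR (n * n) * l) * a n) N x).
    set (q := INR (S N * S N)). field. apply PI_neq0.
Qed.

Lemma ImP_int (a b : nat -> R) N (l x : R) :
  (forall n, (1 <= n <= N)%nat -> b n = INR (n * n) * a n) ->
  is_RInt (fun t => ImP b N (x + t)) (-(l/2)) (l/2)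
    (ImP (fun n => sin (PI * INR (n * n) * l) * a n) N x / PI).
Proof.
  induction N; intros Hb.
  - apply (is_RInt_ext (fun _ => 0)). { intros; rewrite ImP_0; reflexivity. }
    apply (isR_eq _ _ _ _ _ (isR_const _ _ 0)). rewrite ImP_0. field. apply PI_neq0.
  - assert (Hq : 0 < INR (S N * S N)) by (apply lt_0_INR; lia).
    assert (Hbn : b (S N) = INR (S N * S N) * a (S N)) by (apply Hb; lia).
    pose proof (term_sin (INR (S N * S N)) (b (S N)) (a (S N)) x l Hq Hbn) as T.
    assert (I : is_RInt (fun t => ImP b N (x + t)) (-(l/2)) (l/2)
       (ImP (fun n => sin (PI * INR (n * n) * l) * a n) N x / PI)) by (apply IHN; intros n Hn; apply Hb; lia).
    pose proof (isR_plus _ _ _ _ _ _ I T) as P.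
    apply (is_RInt_ext _ _ _ _ _ (fun t _ => eq_sym (ImP_S b N (x + t)))).
    apply (isR_eq _ _ _ _ _ P). rewrite ImP_S.
    set (r := ImP (fun n => sin (PI * INR (n * n) * l) * a n) N x).
    set (q := INR (S N * S N)). field. apply PI_neq0.
Qed.


Lemma shift_cont (f : R -> R) (x t : R) : (forall y, continuous f y) -> continuous (fun t => f (x + t)) t.
Proof.
  intros Hf. apply (continuous_comp (fun t => x + t) f).
  - apply (@ex_derive_continuous R_AbsRing R_NormedModule). auto_derive. auto.
  - apply Hf.
Qed.

Lemma pointwise (p l : R) (a b : nat -> R) N (x : R) : 1 <= p -> 0 < l ->
  (forall n, (1 <= n <= N)%nat -> b n = INR (n * n) * a n) ->
  rpow (sq_poly_abs (fun n => sin (PI * INR (n * n) * l) * a n) N x) p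
  <= Rpower (PI * l) p / l * RInt (fun t => rpow (sq_poly_abs b N (x + t)) p) (-(l/2)) (l/2).
Proof.
  intros Hp Hl Hb. pose proof PI_RGT_0 as Hpi.
  set (cg := fun n => sin (PI * INR (n * n) * l) * a n).
  set (A1 := ReP cg N x / PI). set (A2 := ImP cg N x / PI).
  pose proof (jensen2 p (fun t => ReP b N (x + t)) (fun t => ImP b N (x + t)) (-(l/2)) (l/2) A1 A2 Hp
    ltac:(lra) (fun t => shift_cont _ x t (ReP_cont b N)) (fun t => shift_cont _ x t (ImP_cont b N))
    (ReP_int a b N l x Hb) (ImP_int a b N l x Hb)) as J.
  replace (l / 2 - - (l / 2)) with l in J by field.
  change (l * rpow (sqrt ((A1 / l) ^ 2 + (A2 / l) ^ 2)) p <=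
       RInt (fun t => rpow (sq_poly_abs b N (x + t)) p) (- (l / 2)) (l / 2)) in J.
  set (u := sqrt ((A1 / l) ^ 2 + (A2 / l) ^ 2)) in J.
  set (Ig := RInt (fun t => rpow (sq_poly_abs b N (x + t)) p) (- (l / 2)) (l / 2)) in *.
  assert (Hs : sq_poly_abs cg N x = PI * l * u).
  { rewrite sq_poly_abs_eq. unfold u.
    rewrite <- (sqrt_pow2 (PI * l)) by nra.
    rewrite <- sqrt_mult_alt by nra. f_equal.
    unfold A1, A2. field. lra. }
  rewrite Hs.
  pose proof (rpow_nonneg u p).
  assert (HK : 0 < Rpower (PI * l) p) by (unfold Rpower; apply exp_pos).
  destruct (Req_dec u 0) as [E|E].
  - rewrite E, Rmult_0_r. unfold rpow at 1. destruct (Req_EM_T 0 0); [|congruence].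
    assert (0 <= Ig) by nra.
    apply Rmult_le_pos; [|lra]. apply Rmult_le_pos; [lra|]. left; apply Rinv_0_lt_compat; lra.
  - assert (Hu : 0 < u) by (pose proof (sqrt_pos ((A1 / l) ^ 2 + (A2 / l) ^ 2)); unfold u in *; lra).
    assert (0 < PI * l * u) by (apply Rmult_lt_0_compat; nra).
    rewrite rpow_pos by lra. rewrite rpow_pos in J by lra.
    rewrite <- Rpower_mult_distr by nra.
    apply (Rmult_le_reg_l l); [lra|].
    replace (l * (Rpower (PI * l) p / l * Ig)) with (Rpower (PI * l) p * Ig) by (field; lra).
    replace (l * (Rpower (PI * l) p * Rpower u p)) with (Rpower (PI * l) p * (l * Rpower u p)) by ring.
    apply Rmult_le_compat_l; lra.
Qed.


Lemma exR (f : R -> R) a b : (forall y, continuous f y) -> ex_RInt f a b.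
Proof. intros Hf. apply (@ex_RInt_continuous R_CompleteNormedModule). intros; apply Hf. Qed.

Lemma RInt_shift (f : R -> R) (v a b : R) : (forall y, continuous f y) ->
  RInt (fun t => f (t + v)) a b = RInt f (a + v) (b + v).
Proof.
  intros Hf.
  pose proof (is_RInt_comp_lin f 1 v a b _ (RInt_correct _ _ _ (exR f (1 * a + v) (1 * b + v) Hf))) as H.
  apply is_RInt_unique.
  rewrite !Rmult_1_l in H.
  apply (is_RInt_ext (fun y => scal 1 (f (1 * y + v)))); [|exact H].
  intros y _. change (1 * f (1 * y + v) = f (y + v)). rewrite !Rmult_1_l. reflexivity.
Qed.

Lemma RInt_chas (f : R -> R) a b c : (forall y, continuous f y) ->
  RInt f a b + RInt f b c = RInt f a c.
Proof. intros Hf. apply (RInt_Chasles f a b c); apply exR; auto. Qed.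

Section Per.
Variable H : R -> R.
Hypothesis Hc : forall y, continuous H y.
Hypothesis Hper : forall y, H (y + 1) = H y.

Definition Psi (y : R) := RInt H 0 y.

Lemma Psi_cont y : continuous Psi y.
Proof.
  apply (@ex_derive_continuous R_AbsRing R_NormedModule).
  exists (H y). apply (is_derive_RInt H Psi 0 y).
  - apply filter_forall. intros z. unfold Psi. apply (@RInt_correct R_CompleteNormedModule). apply exR; auto.
  - apply Hc.
Qed.

Lemma Psi_per y : Psi (y + 1) = Psi y + RInt H 0 1.
Proof.
  unfold Psi. rewrite <- (RInt_chas H 0 1 (y + 1)) by auto.
  replace (RInt H 1 (y + 1)) with (RInt H 0 y). lra.
  replace 1 with (0 + 1) at 1 by ring.
  rewrite <- RInt_shift by auto.
  apply RInt_ext. intros; rewrite Hper; reflexivity.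
Qed.

Lemma inner_eq x c : RInt (fun t => H (x + t)) (-c) c = Psi (x + c) - Psi (x - c).
Proof.
  rewrite (RInt_ext _ (fun t => H (t + x))) by (intros; f_equal; ring).
  rewrite RInt_shift by auto.
  unfold Psi. rewrite <- (RInt_chas H 0 (x - c) (x + c)) by auto.
  replace (- c + x) with (x - c) by ring. replace (c + x) with (x + c) by ring. lra.
Qed.

Lemma outer_eq c : RInt (fun x => Psi (x + c) - Psi (x - c)) 0 1 = 2 * c * RInt H 0 1.
Proof.
  assert (Pc := Psi_cont).
  assert (Sc : forall v y, continuous (fun t => Psi (t + v)) y).
  { intros v y. apply (continuous_comp (fun t => t + v) Psi).
    - apply (@ex_derive_continuous R_AbsRing R_NormedModule). auto_derive. auto.
    - apply Pc. }
  rewrite (RInt_minus (fun x => Psi (x + c)) (fun x => Psi (x - c))) by (apply exR; intros y; first [apply Sc |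
     exact (continuous_ext (fun t => Psi (t + - c)) _ y (fun _ => eq_refl) (Sc (-c) y))]).
  change (RInt (fun x => Psi (x + c)) 0 1 - RInt (fun x => Psi (x + - c)) 0 1 = 2 * c * RInt H 0 1).
  rewrite !RInt_shift by auto.
  rewrite <- (RInt_chas Psi (0 + c) (1 - c) (1 + c)) by auto.
  rewrite <- (RInt_chas Psi (0 + - c) c (1 + - c)) by auto.
  replace (RInt Psi (1 - c) (1 + c)) with (RInt (fun t => Psi (t + 1)) (- c) c).
  2:{ rewrite RInt_shift by auto. f_equal; lra. }
  rewrite (RInt_ext (fun t => Psi (t + 1)) (fun t => plus (Psi t) (RInt H 0 1))) by (intros; apply Psi_per).
  rewrite (@RInt_plus R_CompleteNormedModule Psi (fun _ => RInt H 0 1)) by (apply exR; auto; intros; apply continuous_const).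
  rewrite RInt_const.
  change (plus ?u ?v) with (u + v). change (scal ?u ?v) with (u * v).
  replace (0 + c) with c by lra. replace (0 + - c) with (- c) by lra.
  replace (1 + - c) with (1 - c) by lra. lra.
Qed.
Lemma Psi_diff_cont c y : continuous (fun x => Psi (x + c) - Psi (x - c)) y.
Proof.
  assert (Sc : forall v y, continuous (fun t => Psi (t + v)) y).
  { intros v z. apply (continuous_comp (fun t => t + v) Psi).
    - apply (@ex_derive_continuous R_AbsRing R_NormedModule). auto_derive. auto.
    - apply Psi_cont. }
  apply (continuous_plus (fun x => Psi (x + c)) (fun x => - Psi (x + - c))).
  apply Sc. apply (continuous_opp (fun x => Psi (x + - c))). apply Sc.
Qed.
End Per.


Lemma ReP_per c N y : ReP c N (y + 1) = ReP c N y.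
Proof.
  induction N. reflexivity.
  rewrite !ReP_S, IHN. f_equal. f_equal.
  replace (2 * PI * INR (S N * S N) * (y + 1)) with (2 * PI * INR (S N * S N) * y + 2 * INR (S N * S N) * PI) by lra.
  apply cos_period.
Qed.
Lemma ImP_per c N y : ImP c N (y + 1) = ImP c N y.
Proof.
  induction N. reflexivity.
  rewrite !ImP_S, IHN. f_equal. f_equal.
  replace (2 * PI * INR (S N * S N) * (y + 1)) with (2 * PI * INR (S N * S N) * y + 2 * INR (S N * S N) * PI) by lra.
  apply sin_period.
Qed.

Lemma main_ineq (p l : R) (a b : nat -> R) N : 1 <= p -> 0 < l ->
  (forall n, (1 <= n <= N)%nat -> b n = INR (n * n) * a n) ->
  Lpnorm p (fun n => sin (PI * INR (n * n) * l) * a n) N <= PI * l * Lpnorm p b N.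
Proof.
  intros Hp Hl Hb. pose proof PI_RGT_0 as Hpi.
  set (Hf := fun y => rpow (sq_poly_abs b N y) p).
  assert (Hc : forall y, continuous Hf y) by (intros; apply rpow_sq_cont; auto).
  assert (Hper : forall y, Hf (y + 1) = Hf y).
  { intros y. unfold Hf. rewrite !sq_poly_abs_eq, ReP_per, ImP_per. reflexivity. }
  set (K := Rpower (PI * l) p / l).
  assert (HK0 : 0 < Rpower (PI * l) p) by (unfold Rpower; apply exp_pos).
  assert (HK : 0 < K) by (unfold K; apply Rdiv_lt_0_compat; lra).
  set (cg := fun n => sin (PI * INR (n * n) * l) * a n).
  set (G := fun x => rpow (sq_poly_abs cg N x) p).
  set (I := RInt Hf 0 1).
  assert (HI : RInt G 0 1 <= Rpower (PI * l) p * I).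
  { apply Rle_trans with (RInt (fun x => K * (Psi Hf (x + l/2) - Psi Hf (x - l/2))) 0 1).
    - apply RInt_le. lra.
      + apply exR. intros; apply rpow_sq_cont; auto.
      + apply exR. intros y.
        apply (continuous_mult (fun _ => K) (fun x => Psi Hf (x + l/2) - Psi Hf (x - l/2))).
        apply continuous_const.
        apply Psi_diff_cont; auto.
      + intros x _. unfold G, K. rewrite <- inner_eq by auto.
        replace (-(l/2)) with (- (l/2)) by reflexivity.
        apply pointwise; auto.
    - rewrite (RInt_scal (fun x => Psi Hf (x + l/2) - Psi Hf (x - l/2))).
      change (scal ?u ?v) with (u * v).
      rewrite outer_eq by auto. unfold K. fold I. right. field. lra.
      apply exR. apply Psi_diff_cont; auto. }
  change (rpow (RInt G 0 1) (1 / p) <= PI * l * rpow I (1 / p)).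
  assert (HG0 : 0 <= RInt G 0 1).
  { apply (is_RInt_ge_0 G 0 1). lra. apply (@RInt_correct R_CompleteNormedModule).
    apply exR. intros; apply rpow_sq_cont; auto. intros; apply rpow_nonneg. }
  pose proof (rpow_nonneg I (1 / p)).
  destruct (Req_dec (RInt G 0 1) 0) as [E|E].
  - rewrite E. unfold rpow at 1. destruct (Req_EM_T 0 0); [|congruence].
    apply Rmult_le_pos; [|lra]. nra.
  - assert (HIp : 0 < I).
    { destruct (Rle_or_lt I 0); auto. assert (Rpower (PI * l) p * I <= 0) by nra. lra. }
    rewrite !rpow_pos by lra.
    apply Rle_trans with (Rpower (Rpower (PI * l) p * I) (1 / p)).
    + apply Rle_Rpower_l. left; apply Rdiv_lt_0_compat; lra. lra.
    + rewrite <- Rpower_mult_distr by lra. rewrite Rpower_mult.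
      replace (p * (1 / p)) with 1 by (field; lra). rewrite Rpower_1 by nra. lra.
Qed.


Lemma npow_id n t : (1 <= n)%nat -> INR (n * n) * / npow n t = npow n (2 - t).
Proof.
  intros Hn. unfold npow. assert (0 < INR n) by (apply lt_0_INR; lia).
  replace (2 - t) with (INR 2 + - t) by (simpl; lra).
  rewrite Rpower_plus, Rpower_Ropp, Rpower_pow by auto. rewrite mult_INR. simpl. ring.
Qed.

Lemma Lpnorm_nonneg p a N : 0 <= Lpnorm p a N.
Proof. apply rpow_nonneg. Qed.

Lemma cosh_pos x : 0 < cosh x.
Proof. unfold cosh. pose proof (exp_pos x). pose proof (exp_pos (- x)). lra. Qed.

Lemma Rpower_pos x y : 0 < Rpower x y.
Proof. unfold Rpower; apply exp_pos. Qed.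

Theorem lemma3p3 :
  (forall s : R, s <= 1 ->
     exists C : R, 0 < C /\
       forall p l B : R, 1 <= p -> 0 < l < 1 / 2 -> 1 <= B ->
         Lpnorm p (fun n => sin (PI * INR (n * n) * l) / npow n (2 * s)) (nsqrt B)
         <= C * (l * Lpnorm p (fun n => npow n (2 * (1 - s))) (nsqrt B)
                 + Rpower B (3 - s) * l ^ 3 * cosh (2 * PI * B * l)
                   * Lpnorm p (fun _ => 1) (nsqrt B)))
  /\
  (exists C : R, 0 < C /\
     forall s p l B : R, 1 < s <= 3 -> 1 <= p -> 0 < l < 1 / 2 -> 1 <= B ->
       Lpnorm p (fun n => sin (PI * INR (n * n) * l) / npow n (2 * s)) (nsqrt B)
       <= C * (l * Lpnorm p (fun n => 1 / npow n (2 * (s - 1))) (nsqrt B)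
               + l ^ 3 * Lpnorm p (fun n => npow n (2 * (3 - s))) (nsqrt B)
               + Rpower B (5 - s) * l ^ 5 * cosh (2 * PI * l * B)
                 * Lpnorm p (fun _ => 1) (nsqrt B))).
Proof.
  pose proof PI_RGT_0 as Hpi.
  split.
  - intros s Hs. exists PI. split; [exact Hpi|]. intros p l B Hp Hl HB.
    assert (M := main_ineq p l (fun n => / npow n (2 * s)) (fun n => npow n (2 * (1 - s))) (nsqrt B) Hp (proj1 Hl)).
    eapply Rle_trans; [apply M|].
    + intros n Hn. rewrite npow_id by lia. f_equal. ring.
    + pose proof (Lpnorm_nonneg p (fun n => npow n (2 * (1 - s))) (nsqrt B)).
      pose proof (Lpnorm_nonneg p (fun _ => 1) (nsqrt B)).
      pose proof (cosh_pos (2 * PI * B * l)). pose proof (Rpower_pos B (3 - s)).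
      assert (0 <= Rpower B (3 - s) * l ^ 3 * cosh (2 * PI * B * l) * Lpnorm p (fun _ => 1) (nsqrt B)).
      { apply Rmult_le_pos; [apply Rmult_le_pos; [apply Rmult_le_pos; [lra | apply pow_le; lra] | lra] | lra]. }
      nra.
  - exists PI. split; [exact Hpi|]. intros s p l B Hs Hp Hl HB.
    assert (M := main_ineq p l (fun n => / npow n (2 * s)) (fun n => 1 / npow n (2 * (s - 1))) (nsqrt B) Hp (proj1 Hl)).
    eapply Rle_trans; [apply M|].
    + intros n Hn. rewrite npow_id by lia. unfold npow. unfold Rdiv. rewrite Rmult_1_l.
      rewrite <- Rpower_Ropp. f_equal. ring.
    + pose proof (Lpnorm_nonneg p (fun n => npow n (2 * (3 - s))) (nsqrt B)).
      pose proof (Lpnorm_nonneg p (fun n => 1 / npow n (2 * (s - 1))) (nsqrt B)).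
      pose proof (Lpnorm_nonneg p (fun _ => 1) (nsqrt B)).
      pose proof (cosh_pos (2 * PI * l * B)). pose proof (Rpower_pos B (5 - s)).
      assert (0 <= Rpower B (5 - s) * l ^ 5 * cosh (2 * PI * l * B) * Lpnorm p (fun _ => 1) (nsqrt B)).
      { apply Rmult_le_pos; [apply Rmult_le_pos; [apply Rmult_le_pos; [lra | apply pow_le; lra] | lra] | lra]. }
      assert (0 <= l ^ 3 * Lpnorm p (fun n => npow n (2 * (3 - s))) (nsqrt B)).
      { apply Rmult_le_pos; try lra. apply pow_le; lra. }
      nra.
Qed.
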